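(* Let $q\ge 2$, let $\mathcal{X}=\mathcal{Y}=\{0,\ldots,q-1\}$, and let $G$ be an error graph for a discrete memoryless channel with input alphabet $\mathcal{X}$ and output alphabet $\mathcal{Y}$. Let $n=n_1+n_2$ with $n_1,n_2$ nonnegative integers, and let $H=(U\sqcup V,E)$ be the bipartite graph whose parts $U$ and $V$ are both copies of $\mathcal{X}^{n_1}$ (input and output sequences of length $n_1$), where $u\in U$ and $v\in V$ are adjacent if and only if $v\neq u$ and $v$ can be obtained from $u$ by a single error. Then a single-error-correcting transmission strategy of length $n$ with one-time feedback after the first $n_1$ symbols that transmits $$M=\sum_{u\in U}M(u)$$ messages exists if and only if there exists a family of nonadaptive single-error-correcting codes $\mathcal{C}(u)$, $u\in \mathcal{X}^{n_1}$, of length $n_2$, where $\mathcal{C}(u)$ has cardinality $M(u)$ and $F(u)$ free points, satisfying $$\sum_{u:\,(u,v)\in E}M(u)\le F(v)\quad\text{for every } v\in V.$$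
   Context: Error graph: a bipartite graph $G$ whose left part is $\mathcal{X}$ and right part is $\mathcal{Y}$; for $q_1\neq q_2$, $q_1$ and $q_2$ are joined if an error may change transmitted symbol $q_1$ into received symbol $q_2$. An error in a transmitted sequence means replacing one symbol $q_1$ by a symbol $q_2$ with $(q_1,q_2)$ an edge of $G$; ''a single error'' means at most one such replacement occurs in the whole transmission. A transmission strategy with one-time feedback after $n_1$ symbols for messages $m\in[M]$: the first $n_1$ transmitted symbols are a function of $m$ only; after they are sent, the encoder learns (error-free, instantaneously) the $n_1$ received symbols, and the remaining $n_2$ transmitted symbols are a function of $m$ and of those received symbols. For a message $m$, its cloud $B(m)$ is the set of output sequences in $\mathcal{Y}^n$ that can be received when $m$ is sent and at most one error occurs; the strategy is single-error-correcting (transmits $M$ messages) if the clouds $B(m)$, $m\in[M]$, are pairwise disjoint. A nonadaptive code of length $n_2$ is a strategy without feedback (each message is mapped to a fixed codeword in $\mathcal{X}^{n_2}$); it is single-error-correcting if its clouds are pairwise disjoint, and its free points are the points of $\mathcal{Y}^{n_2}$ lying in no cloud; $F(u)$ denotes their number for $\mathcal{C}(u)$. *)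

(* Defs.v *)
From mathcomp Require Import all_boot.
Set Implicit Arguments. Unset Strict Implicit. Unset Printing Implicit Defensive.

Definition word (q n : nat) := {ffun 'I_n -> 'I_q}.

Definition catw (q n1 n2 : nat) (u : word q n1) (w : word q n2) : word q (n1 + n2) :=
  [ffun i => match split i with inl j => u j | inr k => w k end].

Definition one_err (q n : nat) (G : rel 'I_q) (x y : word q n) : bool :=
  [exists i, [forall j, (j != i) ==> (y j == x j)] && G (x i) (y i)].

Definition le1_err (q n : nat) (G : rel 'I_q) (x y : word q n) : bool :=
  (x == y) || one_err G x y.

(* Cloud of message m for a feedback strategy (enc1, enc2): the received
   word is catw y1 y2; the encoder learns y1 and sends catw (enc1 m) (enc2 m y1). *)
Definition fb_cloud (q n1 n2 M : nat) (G : rel 'I_q)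
  (enc1 : 'I_M -> word q n1) (enc2 : 'I_M -> word q n1 -> word q n2)
  (m : 'I_M) (y : word q (n1 + n2)) : Prop :=
  exists (y1 : word q n1) (y2 : word q n2),
    y = catw y1 y2 /\ le1_err G (catw (enc1 m) (enc2 m y1)) (catw y1 y2).

Definition fb_SEC (q n1 n2 M : nat) (G : rel 'I_q)
  (enc1 : 'I_M -> word q n1) (enc2 : 'I_M -> word q n1 -> word q n2) : Prop :=
  forall m m' : 'I_M, m != m' -> forall y,
    ~ (fb_cloud G enc1 enc2 m y /\ fb_cloud G enc1 enc2 m' y).

Definition code_SEC (q n K : nat) (G : rel 'I_q) (c : 'I_K -> word q n) : Prop :=
  forall k k' : 'I_K, k != k' -> forall y : word q n,
    ~~ (le1_err G (c k) y && le1_err G (c k') y).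

Definition free_points (q n K : nat) (G : rel 'I_q) (c : 'I_K -> word q n) : nat :=
  #|[set y : word q n | [forall k, ~~ le1_err G (c k) y]]|.

Definition adjH (q n1 : nat) (G : rel 'I_q) (u v : word q n1) : bool :=
  (v != u) && one_err G u v.

(* Main.v *)
Require Import Defs.
From mathcomp Require Import all_boot zify.
Set Implicit Arguments. Unset Strict Implicit. Unset Printing Implicit Defensive.

Section Cat.
Variables (q n1 n2 : nat) (G : rel 'I_q).
Hypothesis hG : forall a, ~~ G a a.

Lemma catwL (a : word q n1) (b : word q n2) j : catw a b (lshift n2 j) = a j.
Proof. by rewrite ffunE (unsplitK (inl _ j)). Qed.
Lemma catwR (a : word q n1) (b : word q n2) k : catw a b (rshift n1 k) = b k.
Proof. by rewrite ffunE (unsplitK (inr _ k)). Qed.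

Lemma catw_inj (a c : word q n1) (b d : word q n2) : catw a b = catw c d -> a = c /\ b = d.
Proof.
move=> E; split; apply/ffunP => i.
  by rewrite -(catwL a b) E catwL.
by rewrite -(catwR a b) E catwR.
Qed.

Lemma one_err_neq n (x y : word q n) : one_err G x y -> x != y.
Proof.
case/existsP=> i /andP [_ Gi]; apply/eqP => E; subst y.
by move: (hG (x i)); rewrite Gi.
Qed.

Lemma le1_catw (a c : word q n1) (b d : word q n2) :
  le1_err G (catw a b) (catw c d) <->
  (a = c /\ le1_err G b d) \/ (one_err G a c /\ b = d).
Proof.
split.
  case/orP.
    by move/eqP/catw_inj=> [-> ->]; left; split; rewrite // /le1_err eqxx.
  case/existsP=> i /andP [/forallP Hj Gi].
  rewrite -(splitK i) in Gi Hj; case: (split i) Gi Hj => [j|k] Gi Hj.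
    right; split.
      apply/existsP; exists j; rewrite -(catwL a b) -(catwL c d) Gi andbT.
      apply/forallP => j'; apply/implyP => ne.
      rewrite -(catwL a b j') -(catwL c d j').
      have := Hj (lshift n2 j'); rewrite /= (inj_eq (@lshift_inj _ _)) ne /=.
      by [].
    apply/ffunP => k; rewrite -(catwR a) -(catwR c d); apply/eqP; rewrite eq_sym.
    apply: (implyP (Hj (rshift n1 k))).
    apply/eqP => /(congr1 val) /=; move: (ltn_ord j); lia.
  left; split.
    apply/ffunP => j; rewrite -(catwL a b) -(catwL c d); apply/eqP; rewrite eq_sym.
    apply: (implyP (Hj (lshift n2 j))).
    apply/eqP => /(congr1 val) /=; move: (ltn_ord j); lia.
  apply/orP; right.
  apply/existsP; exists k; rewrite -(catwR a b k) -(catwR c d k) Gi andbT.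
  apply/forallP => k'; apply/implyP => ne.
  rewrite -(catwR a b k') -(catwR c d k').
  have := Hj (rshift n1 k'); rewrite /= (inj_eq (@rshift_inj _ _)) ne /=.
  by [].
case=> [[<- /orP [/eqP <-|]] | [H <-]]; first by rewrite /le1_err eqxx.
  case/existsP=> k /andP [/forallP Hj Gi]; apply/orP; right.
  apply/existsP; exists (rshift n1 k); rewrite !catwR Gi andbT.
  apply/forallP => i; apply/implyP => ne.
  rewrite -(splitK i) in ne *; case: (split i) ne => [j|k'] ne /=.
    by rewrite !catwL.
  rewrite !catwR; apply: (implyP (Hj k')); apply: contra ne => /eqP -> //.
case/existsP: H => j /andP [/forallP Hj Gi]; apply/orP; right.
apply/existsP; exists (lshift n2 j); rewrite !catwL Gi andbT.
apply/forallP => i; apply/implyP => ne.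
rewrite -(splitK i) in ne *; case: (split i) ne => [j'|k'] ne /=.
  rewrite !catwL; apply: (implyP (Hj j')); apply: contra ne => /eqP -> //.
by rewrite !catwR.
Qed.
End Cat.

Section Fwd.
Variables (q n1 n2 M : nat) (G : rel 'I_q).
Hypothesis hG : forall a, ~~ G a a.
Variables (enc1 : 'I_M -> word q n1) (enc2 : 'I_M -> word q n1 -> word q n2).
Hypothesis S : fb_SEC G enc1 enc2.

Lemma cloudA m y : le1_err G (enc2 m (enc1 m)) y -> fb_cloud G enc1 enc2 m (catw (enc1 m) y).
Proof. by move=> h; exists (enc1 m), y; split=> //; apply/le1_catw; left. Qed.

Lemma cloudB m v : one_err G (enc1 m) v -> fb_cloud G enc1 enc2 m (catw v (enc2 m v)).
Proof. by move=> h; exists v, (enc2 m v); split=> //; apply/le1_catw; right. Qed.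

Definition Mu u := #|[set m | enc1 m == u]|.
Definition Cf u (k : 'I_(Mu u)) := enc2 (enum_val k) u.

Lemma Mu_sum : M = \sum_u Mu u.
Proof.
rewrite -{1}(card_ord M) -sum1_card (partition_big enc1 xpredT) //.
apply: eq_bigr => u _; rewrite /Mu -sum1_card; apply: eq_bigl => m.
by rewrite inE.
Qed.

Lemma Cf_SEC u : code_SEC G (@Cf u).
Proof.
move=> k k' ne y; apply/negP => /andP [h1 h2].
have e1 : enc1 (enum_val k) = u by have := enum_valP k; rewrite inE => /eqP.
have e2 : enc1 (enum_val k') = u by have := enum_valP k'; rewrite inE => /eqP.
apply: (@S (enum_val k) (enum_val k') _ (catw u y)).
  by apply: contra ne => /eqP /enum_val_inj ->.
split.
  by have := @cloudA (enum_val k) y; rewrite e1; apply.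
by have := @cloudA (enum_val k') y; rewrite e2; apply.
Qed.

Lemma Cf_free v : \sum_(u | adjH G u v) Mu u <= free_points G (@Cf v).
Proof.
have -> : \sum_(u | adjH G u v) Mu u = #|[set m | adjH G (enc1 m) v]|.
  rewrite -sum1_card (partition_big enc1 (fun u => adjH G u v)) => [|m];
    last by rewrite inE.
  apply: eq_bigr => u Hu; rewrite /Mu -sum1_card; apply: eq_bigl => m.
  by rewrite !inE; case: eqP => [->|]; rewrite ?Hu ?andbF.
rewrite /free_points -(@card_in_imset _ _ (fun m => enc2 m v)).
  apply: subset_leq_card; apply/subsetP => y /imsetP [m]; rewrite inE => /andP [nev ov] ->.
  rewrite inE; apply/forallP => k; apply/negP => h.
  have e : enc1 (enum_val k) = v by have := enum_valP k; rewrite inE => /eqP.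
  apply: (@S m (enum_val k) _ (catw v (enc2 m v))).
    by apply/eqP => E; move: nev; rewrite E e eqxx.
  split; first exact: cloudB.
  by have := @cloudA (enum_val k) (enc2 m v); rewrite e; apply.
move=> m m'; rewrite !inE => /andP [_ o1] /andP [_ o2] E.
apply/eqP; apply: contraT => ne.
exfalso; apply: (@S _ _ ne (catw v (enc2 m v))); split; first exact: cloudB.
by rewrite E; exact: cloudB.
Qed.
End Fwd.

Section Bwd.
Variables (q n1 n2 : nat) (G : rel 'I_q).
Hypothesis hq : 0 < q.
Hypothesis hG : forall a, ~~ G a a.
Variables (Mu : word q n1 -> nat) (C : forall u : word q n1, 'I_(Mu u) -> word q n2).
Arguments C : clear implicits.
Hypothesis hC : forall u, code_SEC G (C u).
Hypothesis hF : forall v : word q n1,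
          \sum_(u : word q n1 | adjH G u v) Mu u <= free_points G (C v).

Local Notation T := {u : word q n1 & 'I_(Mu u)}.

Lemma card_tag (P : pred (word q n1)) :
  #|[set t : T | P (tag t)]| = \sum_(u | P u) Mu u.
Proof.
rewrite -sum1_card (partition_big (@tag _ _) P) => [|t]; last by rewrite inE.
apply: eq_bigr => u Pu.
have -> : \sum_(t in [set t : T | P (tag t)] | tag t == u) 1 =
          #|[set Tagged (fun u => 'I_(Mu u)) k | k : 'I_(Mu u)]|.
  rewrite -sum1_card; apply: eq_bigl => t; rewrite inE.
  case: t => u' k /=; apply/idP/idP.
    by case/andP=> _ /eqP E; subst u'; apply: imset_f.
  case/imsetP=> k' _ E; move: (congr1 (@tag _ _) E) => /= ->.
  by rewrite eqxx andbT Pu.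
rewrite card_imset ?card_ord //.
move=> k k' E; exact: eq_from_Tagged E.
Qed.

Lemma cardT : #|{: T}| = \sum_u Mu u.
Proof.
rewrite -(card_tag xpredT); apply: eq_card => t; by rewrite inE.
Qed.

Variable M : nat.
Hypothesis hM : M = \sum_u Mu u.

Definition dec (m : 'I_M) : T :=
  enum_val (cast_ord (etrans hM (esym cardT)) m).

Lemma dec_inj : injective dec.
Proof. by move=> m m' /enum_val_inj /cast_ord_inj. Qed.

Lemma dec_bij : bijective dec.
Proof. apply: (@inj_card_bij _ _ dec dec_inj); by rewrite card_ord hM cardT. Qed.

Definition e1 m := tag (dec m).

Definition Aset v := [set m | adjH G (e1 m) v].
Definition Free v := [set y : word q n2 | [forall k, ~~ le1_err G (C v k) y]].

Definition y0 : word q n2 := [ffun _ => Ordinal hq].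

Definition f v m := nth y0 (enum (Free v)) (index m (enum (Aset v))).

Definition e2 m y1 :=
  if y1 == e1 m then C (tag (dec m)) (tagged (dec m)) else f y1 m.

Lemma card_A v : #|Aset v| = \sum_(u | adjH G u v) Mu u.
Proof.
rewrite -card_tag; have [g dK gK] := dec_bij.
rewrite -(card_imset _ dec_inj); apply: eq_card => t; rewrite !inE.
apply/imsetP/idP => [[m]|].
  by rewrite inE => h ->.
by move=> h; exists (g t); rewrite ?inE /e1 gK.
Qed.

Lemma f_in v m : m \in Aset v -> f v m \in Free v.
Proof.
move=> h; rewrite /f -mem_enum; apply: mem_nth.
rewrite -cardE; apply: leq_trans (hF v); rewrite -card_A cardE index_mem mem_enum.
exact: h.
Qed.

Lemma f_inj v m m' : m \in Aset v -> m' \in Aset v -> f v m = f v m' -> m = m'.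
Proof.
move=> h h' /eqP; rewrite /f nth_uniq ?enum_uniq //; last first.
- rewrite -cardE; apply: leq_trans (hF v); rewrite -card_A cardE index_mem mem_enum.
  exact: h'.
- rewrite -cardE; apply: leq_trans (hF v); rewrite -card_A cardE index_mem mem_enum.
  exact: h.
move/eqP => E.
have Hm : m \in enum (Aset v) by rewrite mem_enum.
have Hm' : m' \in enum (Aset v) by rewrite mem_enum.
by rewrite -(nth_index m Hm) E (nth_index m Hm').
Qed.

Lemma cloud_inv m y1 y2 :
  fb_cloud G e1 e2 m (catw y1 y2) ->
  (e1 m = y1 /\ le1_err G (C (tag (dec m)) (tagged (dec m))) y2) \/
  (m \in Aset y1 /\ f y1 m = y2).
Proof.
case=> z1 [z2 [/catw_inj [Ez1 Ez2]]]; subst z1 z2.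
move=> /le1_catw [[E h]|[h E]].
  by left; split=> //; move: h; rewrite /e2 E eqxx.
right; have ne : y1 != e1 m by rewrite eq_sym; exact: (one_err_neq hG h).
have hA : m \in Aset y1 by rewrite inE /adjH ne h.
by split=> //; move: E; rewrite /e2 (negbTE ne).
Qed.

Lemma bwd_SEC : fb_SEC G e1 e2.
Proof.
move=> m m' ne y [c1 c2].
have [y1 [y2 [Ey _]]] := c1.
move: c1 c2; rewrite Ey => /cloud_inv c1 /cloud_inv c2.
case: c1 c2 => [[E1 h1]|[A1 F1]] [[E2 h2]|[A2 F2]].
- move: E1 E2 h1 h2 ne; rewrite /e1 -(inj_eq dec_inj).
  case: (dec m) => u k; case: (dec m') => u' k' /= E1 E2; subst u u'.
  move=> h1 h2 ne; have nk : k != k'.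
    by apply: contra ne => /eqP ->.
  by move: (hC nk y2); rewrite h1 h2.
- move: (f_in A2); rewrite F2 inE -E1 => /forallP /(_ (tagged (dec m))).
  by rewrite h1.
- move: (f_in A1); rewrite F1 inE -E2 => /forallP /(_ (tagged (dec m'))).
  by rewrite h2.
- by move: ne; rewrite (f_inj A1 A2) ?F1 ?F2 // eqxx.
Qed.
End Bwd.

Unset Implicit Arguments.

Theorem theorem1 (q : nat) (hq : 2 <= q) (G : rel 'I_q)
  (hG : forall a, ~~ G a a) (n1 n2 M : nat) :
  (exists (enc1 : 'I_M -> word q n1) (enc2 : 'I_M -> word q n1 -> word q n2),
      fb_SEC G enc1 enc2)
  <->
  (exists (Mu : word q n1 -> nat) (C : forall u : word q n1, 'I_(Mu u) -> word q n2),
      M = \sum_(u : word q n1) Mu u /\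
      (forall u, code_SEC G (C u)) /\
      (forall v : word q n1,
          \sum_(u : word q n1 | adjH G u v) Mu u <= free_points G (C v))).
Proof.
split.
  move=> [enc1 [enc2 S]].
  exists (Mu enc1), (fun u => @Cf q n1 n2 M enc1 enc2 u).
  split; first exact: Mu_sum.
  split; first by move=> u; exact: (Cf_SEC S).
  by move=> v; exact: (Cf_free S v).
move=> [Mu [C [hM [hC hF]]]].
have hq0 : 0 < q by apply: leq_trans hq.
exists (e1 hM), (e2 G hq0 C hM).
exact: (@bwd_SEC q n1 n2 G hq0 hG Mu C hC hF M hM).
Qed.
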